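(* Let $G$ be a cacti-graph and $a,b\in E(G)$. If $a$ and $b$ lie in the same component of $G$, then for every integer $k$ with $1\le k\le \Delta G$ there exists a subgraph $F$ of $G$ such that $a,b\in E(F)$, $F$ is a cacti-graph, and $\Delta F=k$. If $a$ and $b$ lie in different components of $G$, then for every integer $k$ with $2\le k\le\Delta G$ there exists a subgraph $F$ of $G$ such that $a,b\in E(F)$, $F$ is a cacti-graph, and $\Delta F=k$.
   Context: Graphs are finite, may have loops and parallel edges, and have no isolated vertices unless stated otherwise. A leaf is a vertex incident to exactly one edge, which is not a loop. $\Delta G=|E(G)|-|V(G)|$. A cycle is a connected graph all of whose vertices have degree 2 (a loop contributes 2). A cacti-graph is a graph with no isolated vertices, no leaves, and no component that is a cycle (equivalently, no isolated vertices, no leaves, and every component contains at least two cycles). *)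

(* Defs.v *)
(* Finite multigraphs (loops and parallel edges allowed):
   vertex type V, edge type E (both finite), each edge e has endpoints
   src e and dst e (a loop has src e = dst e).  A (sub)graph is a pair
   (VS, ES) of a vertex set and an edge set whose edges have endpoints in VS. *)
From HB Require Import structures.
From mathcomp Require Import all_boot all_order all_algebra.
Set Implicit Arguments. Unset Strict Implicit. Unset Printing Implicit Defensive.

Section Graphs.
Variables (V E : finType) (src dst : E -> V).

Definition incident (e : E) (v : V) : bool := (src e == v) || (dst e == v).

Definition is_graph (VS : {set V}) (ES : {set E}) : bool :=
  [forall e in ES, (src e \in VS) && (dst e \in VS)].

Definition is_subgraph (VF : {set V}) (EF : {set E}) (VG : {set V}) (EG : {set E}) : bool :=
  [&& is_graph VF EF, VF \subset VG & EF \subset EG].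

(* degree; a loop contributes 2 *)
Definition deg (ES : {set E}) (v : V) : nat :=
  \sum_(e in ES) ((src e == v) + (dst e == v)).

Definition isolated (ES : {set E}) (v : V) : bool :=
  [forall e in ES, ~~ incident e v].

Definition leaf (ES : {set E}) (v : V) : bool :=
  (#|[set e in ES | incident e v]| == 1) &&
  [forall e in ES, incident e v ==> (src e != dst e)].

Definition adj (ES : {set E}) : rel V :=
  fun x y => [exists e in ES, ((src e == x) && (dst e == y)) || ((src e == y) && (dst e == x))].

Definition component (VS : {set V}) (ES : {set E}) (v : V) : {set V} :=
  [set u in VS | connect (adj ES) v u].

(* the component containing v is a cycle: a connected graph all of whose
   vertices have degree 2 (components are connected by construction) *)
Definition component_is_cycle (VS : {set V}) (ES : {set E}) (v : V) : bool :=
  [forall u in component VS ES v, deg ES u == 2].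

Definition cacti (VS : {set V}) (ES : {set E}) : bool :=
  [&& [forall v in VS, ~~ isolated ES v],
      [forall v in VS, ~~ leaf ES v] &
      [forall v in VS, ~~ component_is_cycle VS ES v]].

Definition Delta (VS : {set V}) (ES : {set E}) : int := (#|ES|%:Z - #|VS|%:Z)%R.

End Graphs.

(* Main.v *)
Require Import Defs.
From HB Require Import structures.
From mathcomp Require Import all_boot all_order all_algebra.
From mathcomp Require Import zify.
Import Order.TTheory GRing.Theory Num.Theory.
Set Implicit Arguments. Unset Strict Implicit. Unset Printing Implicit Defensive.

Section Basics.
Variables (V E : finType) (src dst : E -> V).
Local Notation deg := (deg src dst).
Local Notation adj := (adj src dst).
Local Notation incident := (incident src dst).
Local Notation is_graph := (is_graph src dst).

Definition cnt (e : E) (v : V) : nat := (src e == v) + (dst e == v).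

Lemma degE (A : {set E}) v : deg A v = \sum_(e in A) cnt e v.
Proof. by []. Qed.

Lemma deg_sub (A B : {set E}) v : A \subset B -> deg A v <= deg B v.
Proof.
move=> AB; rewrite /Defs.deg [X in _ <= X](big_setID A) /= (setIidPr AB).
exact: leq_addr.
Qed.

Lemma degU (A B : {set E}) v : [disjoint A & B] -> deg (A :|: B) v = deg A v + deg B v.
Proof.
move=> dAB; rewrite /Defs.deg -bigU //; apply: eq_bigl => e; by rewrite !inE.
Qed.

Lemma deg1 e v : deg [set e] v = cnt e v.
Proof. by rewrite /Defs.deg big_set1. Qed.

Lemma deg0 v : deg set0 v = 0.
Proof. by rewrite /Defs.deg big_set0. Qed.

Lemma card_inc_le (A : {set E}) v : #|[set e in A | incident e v]| <= deg A v.
Proof.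
rewrite /Defs.deg -sum1_card !big_mkcond /=.
rewrite [X in _ <= X]big_mkcond /=.
apply: leq_sum => e _; rewrite !inE /Defs.incident.
by case: (e \in A); case: (src e == v); case: (dst e == v).
Qed.

Lemma deg_pos_inc (A : {set E}) v : 0 < deg A v -> exists2 e, e \in A & incident e v.
Proof.
move=> h; case: (boolP [exists e in A, incident e v]).
  by case/existsP => e /andP[eA ie]; exists e.
move=> /existsPn hn; move: h; rewrite /Defs.deg big1 // => e eA.
by have := hn e; rewrite eA /= /Defs.incident negb_or => /andP[/negPf-> /negPf->].
Qed.

Lemma deg_split (A : {set E}) v : deg [set: E] v = deg A v + deg (~: A) v.
Proof. by rewrite -degU ?setUCr // disjoints_subset setCK. Qed.

Lemma adj_sym (A : {set E}) : symmetric (adj A).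
Proof.
move=> x y; rewrite /Defs.adj; apply/existsP/existsP => -[e He]; exists e;
by move: He; rewrite orbC.
Qed.

Lemma connect_mono (A B : {set E}) x y : A \subset B -> connect (adj A) x y -> connect (adj B) x y.
Proof.
move=> AB; apply: connect_sub => u w /existsP[e /andP[eA h]].
apply: connect1; apply/existsP; exists e; by rewrite (subsetP AB _ eA).
Qed.

Lemma sum_eq1 (C : {set V}) y : \sum_(x in C) (y == x) = (y \in C).
Proof.
case: (boolP (y \in C)) => yC.
  rewrite (bigD1 y) //= eqxx big1 // => x /andP[_ /negPf]; by rewrite eq_sym => ->.
by rewrite big1 // => x xC; apply/eqP; rewrite eqb0; apply: contraNneq yC => ->.
Qed.

Lemma sum_deg (A : {set E}) (C : {set V}) :
  (forall e, e \in A -> (src e \in C) = (dst e \in C)) ->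
  \sum_(x in C) deg A x = 2 * #|[set e in A | src e \in C]|.
Proof.
move=> h; rewrite /Defs.deg exchange_big /=.
rewrite -sum1_card big_distrr /= big_mkcond /=.
rewrite [RHS]big_mkcond /=; apply: eq_bigr => e _.
rewrite inE; case: (boolP (e \in A)) => eA //=.
rewrite big_split /= !sum_eq1 -(h e eA).
by case: (src e \in C).
Qed.

Lemma graphP (VS : {set V}) (ES : {set E}) :
  reflect (forall e, e \in ES -> src e \in VS /\ dst e \in VS) (is_graph VS ES).
Proof.
apply: (iffP forallP) => [h e eE | h e]; first by have := h e; rewrite eE => /andP.
by apply/implyP => eE; have [-> ->] := h e eE.
Qed.

Definition mindeg2 (VS : {set V}) (ES : {set E}) := forall v, v \in VS -> 1 < deg ES v.

Lemma card_split (A : {set E}) (P : pred E) :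
  #|[set e in A | P e]| + #|[set e in A | ~~ P e]| = #|A|.
Proof.
rewrite -(cardsID [set e | P e] A); congr (_ + _); apply: eq_card => e; by rewrite !inE andbC.
Qed.

Lemma prune n (VH : {set V}) (EH : {set E}) (VD : {set V}) (ED : {set E}) :
  is_graph VH EH -> is_graph VD ED -> VD \subset VH -> ED \subset EH -> mindeg2 VD ED ->
  #|VH| <= n ->
  exists VH' EH', [/\ is_graph VH' EH', VD \subset VH', VH' \subset VH,
     ED \subset EH' & EH' \subset EH] /\ mindeg2 VH' EH' /\
     #|EH| + #|VH'| <= #|EH'| + #|VH|.
Proof.
elim: n VH EH => [|n IH] VH EH gH gD sV sE m2 cV.
  exists VH, EH; split; first by rewrite !subxx.
  split; last by [].
  by move=> v vV; move: cV; rewrite leqn0 cards_eq0 => /eqP h; rewrite h inE in vV.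
case: (boolP [exists v in VH, deg EH v <= 1]); last first.
  move=> /existsPn hn; exists VH, EH; split; first by rewrite !subxx.
  split=> // v vV; have := hn v; by rewrite vV /= -ltnNge.
case/existsP => v /andP[vV dv].
have vD : v \notin VD.
  apply/negP => vD; have := m2 v vD; have := deg_sub v sE; lia.
set VH1 := VH :\ v; set EH1 := [set e in EH | ~~ incident e v].
have g1 : is_graph VH1 EH1.
  apply/graphP => e; rewrite inE /Defs.incident negb_or => /andP[eE /andP[s d]].
  have [s' d'] := (graphP _ _ gH) e eE.
  by rewrite !inE s s' d d'.
have sV1 : VD \subset VH1.
  apply/subsetP => x xD; rewrite !inE (subsetP sV _ xD) andbT.
  by apply: contraNneq vD => <-.
have sE1 : ED \subset EH1.
  apply/subsetP => e eD; have [s d] := (graphP _ _ gD) e eD.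
  rewrite inE (subsetP sE _ eD) /Defs.incident negb_or.
  rewrite /=; apply/andP; split; apply/eqP => h; [rewrite h in s | rewrite h in d]; [by rewrite s in vD | by rewrite d in vD].
have c1 : #|VH1| <= n.
  by move: cV; rewrite /VH1 (cardsD1 v VH) vV add1n ltnS.
have [VH' [EH' [[g' sD' sH' sE' sH2'] [m' cc]]]] := IH VH1 EH1 g1 gD sV1 sE1 m2 c1.
exists VH', EH'; split; first split => //.
- by apply: subset_trans sH' (subD1set _ _).
- by apply: subset_trans sH2' _; apply/subsetP => e; rewrite inE => /andP[].
split=> //.
have h1 := card_split EH (fun e => incident e v).
have h2 := card_inc_le EH v.
have h3 : #|VH| = #|VH1| + 1 by rewrite /VH1 (cardsD1 v VH) vV addnC.
rewrite /EH1 in cc. move: h1 h2 h3 cc dv.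
set x1 := #|[set e in EH | incident e v]|.
set x2 := #|[set e in EH | ~~ incident e v]|.
set x3 := deg EH v.
move=> h1 h2 h3 cc dv. rewrite -h1 h3. clear -cc h2 dv. lia.
Qed.

Lemma leaf_deg (ES : {set E}) v : Defs.leaf src dst ES v -> deg ES v <= 1.
Proof.
case/andP => /cards1P[e0 he] /forallP hl.
have e0I : e0 \in [set e in ES | incident e v] by rewrite he inE.
move: (e0I); rewrite inE => /andP[e0E ie0].
rewrite /Defs.deg (bigD1 e0) //= big1 ?addn0.
  have := hl e0; rewrite e0E ie0 /= => ne; move: ie0; rewrite /Defs.incident.
  by case: eqP => [<-|_]; case: eqP => [h|_] //; rewrite h eqxx in ne.
move=> e /andP[eE ne]; case: (boolP (incident e v)) => ie.
  have : e \in [set e in ES | incident e v] by rewrite inE eE ie.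
  by rewrite he inE (negPf ne).
by move: ie; rewrite /Defs.incident negb_or => /andP[/negPf-> /negPf->].
Qed.

Lemma notleaf_deg (ES : {set E}) v :
  ~~ isolated src dst ES v -> ~~ Defs.leaf src dst ES v -> 1 < deg ES v.
Proof.
move=> ni nl.
have h1 := card_inc_le ES v.
have : 0 < #|[set e in ES | incident e v]|.
  move: ni; rewrite /isolated negb_forall => /existsP[e].
  rewrite negb_imply negbK => /andP[eE ie]; apply/card_gt0P; exists e; by rewrite inE eE ie.
move=> hp; case: (leqP 2 #|[set e in ES | incident e v]|) => h2.
  by apply: leq_trans h2 h1.
have h1' : #|[set e in ES | incident e v]| = 1 by apply/eqP; rewrite eqn_leq -ltnS h2 hp.
move: nl; rewrite /Defs.leaf h1' eqxx /= negb_forall => /existsP[e].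
case: (boolP (e \in ES)) => eE //=; case: (boolP (incident e v)) => ie //=.
rewrite negbK => /eqP se.
have := deg_sub v (_ : [set e] \subset ES); rewrite sub1set eE deg1 /cnt se => /(_ isT).
by move: ie; rewrite /Defs.incident se orbb => /eqP->; rewrite eqxx.
Qed.

Definition P3 (VD : {set V}) (ED : {set E}) :=
  forall v, v \in VD -> exists2 u, u \in VD & connect (adj ED) v u && (2 < deg ED u).

Lemma comp_closed (VF : {set V}) (EF : {set E}) w e :
  is_graph VF EF -> e \in EF ->
  (src e \in component src dst VF EF w) = (dst e \in component src dst VF EF w).
Proof.
move=> g eF; have [s d] := (graphP _ _ g) e eF.
have a1 : adj EF (src e) (dst e) by apply/existsP; exists e; rewrite eF !eqxx.
rewrite !inE s d /=; apply/idP/idP => h.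
  exact: connect_trans h (connect1 a1).
apply: connect_trans h (connect1 _); by rewrite adj_sym.
Qed.

Lemma mindeg2_cacti (VF : {set V}) (EF : {set E}) :
  mindeg2 VF EF -> (forall w, w \in VF -> ~~ component_is_cycle src dst VF EF w) ->
  cacti src dst VF EF.
Proof.
move=> m nc; apply/and3P; split; apply/forallP => v; apply/implyP => vF.
- apply/negP => /forallP iso; have := m v vF; move/ltnW/deg_pos_inc => [e eF ie].
  by have := iso e; rewrite eF ie.
- apply/negP => /leaf_deg; have := m v vF; lia.
- exact: nc.
Qed.

Lemma partA (kn : nat) (VD : {set V}) (ED : {set E}) a b :
  is_graph VD ED -> mindeg2 VD ED -> P3 VD ED -> a \in ED -> b \in ED ->
  #|ED| <= #|VD| + kn -> 
  forall n (VF : {set V}) (EF : {set E}), is_graph VF EF -> VD \subset VF -> ED \subset EF ->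
  mindeg2 VF EF -> #|VF| + kn <= #|EF| -> #|EF| + #|VF| <= n ->
  exists VF' EF', [/\ is_graph VF' EF', a \in EF', b \in EF', cacti src dst VF' EF' &
     #|EF'| = #|VF'| + kn].
Proof.
move=> gD mD pD aD bD cD n; elim: n => [|n IH] VF EF gF sV sE mF cF sz.
  have : #|ED| = 0 by move: sz (subset_leq_card sE); lia.
  move/eqP; rewrite cards_eq0 => /eqP ED0; by rewrite ED0 inE in aD.
case: (ltngtP (#|VF| + kn) #|EF|) cF => // [lt _|eq _].
  have [e eF eD] : exists2 e, e \in EF & e \notin ED.
    apply/exists_inP; apply: contraLR lt => /exists_inPn hn.
    have EE : EF \subset ED by apply/subsetP => e eF; have := hn e eF; rewrite negbK.
    have VV : VF \subset VD.
      apply/subsetP => v vF; have := mF v vF; move/ltnW/deg_pos_inc => [e eF ie].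
      have [s d] := (graphP _ _ gD) e (subsetP EE _ eF).
      by move: ie; rewrite /Defs.incident => /orP[] /eqP <-.
    have := subset_leq_card EE; have := subset_leq_card VV.  have := subset_leq_card sV; move=> h0 h1 h2; rewrite -leqNgt; clear -h0 h1 h2 cD; lia.
  set EF1 := EF :\ e.
  have g1 : is_graph VF EF1.
    apply/graphP => f; rewrite inE => /andP[_ fF]; exact: (graphP _ _ gF) f fF.
  have sE1 : ED \subset EF1.
    apply/subsetP => f fD; rewrite inE (subsetP sE _ fD) andbT.
    by rewrite inE; apply/eqP => fe; rewrite -fe fD in eD.
  have [VF2 [EF2 [[g2 sD2 sV2 sE2 sE2'] [m2 cc]]]] :=
    prune (n:=#|VF|) g1 gD sV sE1 mD (leqnn _).
  have ce : #|EF| = #|EF1| + 1 by rewrite /EF1 (cardsD1 e EF) eF addnC.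
  have c1 := subset_leq_card sV2.
  have c2 := subset_leq_card sE2'.
  apply: (IH VF2 EF2 g2 sD2 sE2 m2); clear -ce c1 c2 cc sz lt; lia.
case: (boolP [exists w in VF, component_is_cycle src dst VF EF w]); last first.
  move=> /exists_inPn nc; exists VF, EF; split => //; first exact: subsetP sE _ aD.
  - exact: subsetP sE _ bD.
  - exact: mindeg2_cacti.
case/exists_inP => w wF cyc.
set C := component src dst VF EF w.
have Cmem : forall x, (x \in C) = (x \in VF) && connect (adj EF) w x by move=> x; rewrite inE.
have cycC : forall u, u \in C -> deg EF u = 2.
  by move=> u uC; have := (forallP cyc) u; rewrite uC => /eqP.
have cl : forall f, f \in EF -> (src f \in C) = (dst f \in C).
  by move=> f; exact: comp_closed.
clearbody C; clear cyc.
have wC : w \in C by rewrite Cmem wF connect0.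
have CV : C \subset VF by apply/subsetP => x; rewrite Cmem => /andP[].
set VF3 := VF :\: C; set EF3 := [set f in EF | src f \notin C].
have g3 : is_graph VF3 EF3.
  apply/graphP => f; rewrite inE => /andP[fF sC]; have [s d] := (graphP _ _ gF) f fF.
  by rewrite /VF3 !in_setD s d -(cl f fF) sC.
have DC : [disjoint VD & C].
  apply/pred0P => v /=; apply/negP => /andP[vD vC].
  have [u uD /andP[cu du]] := pD v vD.
  have uC : u \in C.
    rewrite Cmem (subsetP sV _ uD) /=; move: vC; rewrite Cmem => /andP[_ cw].
    by apply: connect_trans cw (connect_mono sE cu).
  have d2 := cycC u uC.
  move: (deg_sub u sE) => hh; clear -hh du d2; lia.
have sV3 : VD \subset VF3.
  apply/subsetP => v vD; rewrite inE (subsetP sV _ vD) andbT.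
  by rewrite (disjointFr DC vD).
have sE3 : ED \subset EF3.
  apply/subsetP => f fD; rewrite inE (subsetP sE _ fD) /=.
  have [s _] := (graphP _ _ gD) f fD; by rewrite (disjointFr DC s).
have m3 : mindeg2 VF3 EF3.
  move=> v; rewrite in_setD => /andP[vC vF]; have := mF v vF.
  suff -> : deg EF3 v = deg EF v by [].
  have sub3 : EF3 \subset EF by apply/subsetP => f; rewrite inE => /andP[].
  rewrite /Defs.deg [in RHS](big_setID EF3) /= (setIidPr sub3) [X in _ = _ + X]big1 ?addn0 //.
  move=> f; rewrite in_setD /EF3 in_set negb_and negbK => /andP[/orP[fnF|fC] fF].
    by rewrite fF in fnF.
  have dC : dst f \in C by rewrite -(cl f fF).
  case: eqP => [e1|_]; first by rewrite -e1 fC in vC.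
  case: eqP => [e1|_]; first by rewrite -e1 dC in vC.
  by [].
have cC : #|[set f in EF | src f \in C]| = #|C|.
  have h := sum_deg cl.
  rewrite (eq_bigr (fun _ => 2)) ?sum_nat_const in h; last first.
    by move=> x xC; rewrite cycC.
  by apply/eqP; rewrite -(eqn_pmul2l (isT : 0 < 2)) -h mulnC.
have cE := card_split EF (fun f => src f \in C).
have cV : #|VF| = #|VF3| + #|C|.
  by rewrite /VF3 -(cardsID C VF) (setIidPr CV) addnC.
have Cpos : 0 < #|C| by apply/card_gt0P; exists w.
have e1 : #|EF3| + #|C| = #|EF| by rewrite /EF3 -cC addnC.
apply: (IH VF3 EF3 g3 sV3 sE3 m3); clearbody EF3 VF3; clear -e1 cV Cpos eq sz; lia.
Qed.

Definition other (e : E) (t : V) := if src e == t then dst e else src e.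

Lemma other_adj (A : {set E}) e t : e \in A -> incident e t -> adj A t (other e t).
Proof.
move=> eA it; apply/existsP; exists e; rewrite eA /= /other.
case: ifP => [_|ns]; first by rewrite eqxx.
by move: it; rewrite /Defs.incident ns /= => /eqP ->; rewrite !eqxx ?orbT.
Qed.

Lemma cnt_pos e v : incident e v -> 0 < cnt e v.
Proof. by rewrite /Defs.incident /cnt; case: (src e == v); case: (dst e == v). Qed.

Lemma deg2set f h v : f != h -> deg [set f; h] v = cnt f v + cnt h v.
Proof.
move=> fh; rewrite degU ?deg1 //.
by rewrite disjoints_subset sub1set !inE.
Qed.

Lemma deg_mem e (A : {set E}) v : e \in A -> cnt e v <= deg A v.
Proof. by move=> eA; rewrite -deg1; apply: deg_sub; rewrite sub1set. Qed.

Section Walk.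
Hypothesis Hd2 : forall v, 1 < deg [set: E] v.

Lemma walk n (T : {set V}) u f : #|~: T| <= n -> u \notin T ->
  ((src f == u) && (dst f \in T)) || ((dst f == u) && (src f \in T)) ->
  exists (N : {set V}) (EW : {set E}), [/\ u \in N, [disjoint N & T], f \notin EW & #|EW| = #|N|] /\ [/\
   (forall e, e \in EW -> [/\ src e \in T :|: N, dst e \in T :|: N & (src e \in N) || (dst e \in N)]),
   (forall x, x \in N -> 1 < deg (f |: EW) x) &
   (forall x, x \in N -> connect (adj EW) u x)].
Proof.
elim: n T u f => [|n IH] T u f cT uT hf.
  move: cT; rewrite leqn0 cards_eq0 => /eqP /setP /(_ u); by rewrite !inE uT.
have cfu : cnt f u = 1.
  rewrite /cnt; case/orP: hf => /andP[/eqP su dT]; rewrite su eqxx.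
    by case: eqP => // h; move: dT; rewrite h (negPf uT).
  by case: eqP => // h; move: dT; rewrite h (negPf uT).
have ifu : incident f u by rewrite /Defs.incident; case/orP: hf => /andP[-> _]; rewrite ?orbT.
have [h hf' ih] : exists2 h, h != f & incident h u.
  have := Hd2 u; rewrite /Defs.deg (big_setD1 f) ?inE // -/(Defs.deg _ _ _ _) -/(cnt f u) cfu.
  rewrite ltnS => /deg_pos_inc [h]; rewrite !inE andbT => hf' ih; by exists h.
set w := other h u.
have ahw : forall A : {set E}, h \in A -> adj A u w by move=> A hA; exact: other_adj.
have wcase : (src h == u) && (dst h == w) || (src h == w) && (dst h == u).
  rewrite /w /other; case: ifP => [_|ns]; first by rewrite !eqxx.
  by move: ih; rewrite /Defs.incident ns /= => /eqP ->; rewrite !eqxx ?orbT.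
case: (boolP ((w \in T) || (w == u))) => hw.
  exists [set u], [set h]; split; split.
  - by rewrite inE.
  - by rewrite disjoints_subset sub1set inE.
  - by rewrite inE eq_sym.
  - by rewrite !cards1.
  - move=> e; rewrite inE => /eqP ->; rewrite !inE.
    case/orP: wcase => /andP[/eqP -> /eqP ->]; rewrite eqxx ?orbT /=;
      by case/orP: hw => ->; rewrite ?orbT.
  - move=> x; rewrite inE => /eqP ->.
    rewrite deg2set 1?eq_sym // cfu.
    by have := cnt_pos ih.
  - by move=> x; rewrite inE => /eqP ->.
move: hw; rewrite negb_or => /andP[wT wu].
have hh : ((src h == w) && (dst h \in u |: T)) || ((dst h == w) && (src h \in u |: T)).
  case/orP: wcase => /andP[/eqP -> /eqP ->]; rewrite eqxx !inE eqxx //= orbT //.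
have cT' : #|~: (u |: T)| <= n.
  move: cT; rewrite setCU (cardsD1 u (~: T)) inE uT /= add1n ltnS.
  by rewrite setIC -setDE.
have wT' : w \notin u |: T by rewrite !inE negb_or wu wT.
have [N' [EW' [[wN dN hEW cEW] [eEW dgW cnW]]]] := IH (u |: T) w h cT' wT' hh.
have uN' : u \notin N'.
  by rewrite (disjointFl dN) // !inE eqxx.
have dN'T : forall x, x \in N' -> x \notin u |: T.
  by move=> x xN; rewrite (disjointFr dN xN).
exists (u |: N'), (h |: EW'); split; split.
- by rewrite !inE eqxx.
- rewrite disjoints_subset; apply/subsetP => x; rewrite !inE => /orP[/eqP ->|xN] //.
  by have := dN'T x xN; rewrite !inE negb_or => /andP[].
- rewrite !inE negb_or eq_sym hf' /=; apply/negP => fE.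
  have [_ _] := eEW f fE; move=> /orP[] xN; have := dN'T _ xN; rewrite !inE negb_or.
  by case/orP: hf => /andP[/eqP e1 e2]; rewrite ?e1 ?e2 ?eqxx ?andbF.
  by case/orP: hf => /andP[/eqP e1 e2]; rewrite ?e1 ?e2 ?eqxx ?andbF.
- by rewrite !cardsU1 hEW uN' cEW.
- move=> e; rewrite !inE => /orP[/eqP ->|eE].
    case/orP: wcase => /andP[/eqP -> /eqP ->]; rewrite !eqxx wN !orbT //.
  have [s d o] := eEW e eE; move: s d o; rewrite !inE.
  by move: (src e == u) (src e \in T) (src e \in N') (dst e == u) (dst e \in T) (dst e \in N') => [] [] [] [] [] [].
- move=> x; rewrite !inE => /orP[/eqP ->|xN].
    apply: leq_trans (_ : deg [set f; h] u <= _); last first.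
      by apply: deg_sub; rewrite subUset !sub1set !inE !eqxx ?orbT.
    by rewrite deg2set 1?eq_sym // cfu; have := cnt_pos ih.
  apply: leq_trans (dgW x xN) _; apply: deg_sub.
  by apply/subsetP => e; rewrite !inE => /orP[] ->; rewrite ?orbT.
- move=> x; rewrite !inE => /orP[/eqP ->|xN]; first exact: connect0.
  apply: connect_trans (connect1 (ahw _ _)) _; first by rewrite !inE eqxx.
  apply: connect_mono (cnW x xN); by apply/subsetP => e; rewrite !inE => ->; rewrite orbT.
Qed.

Lemma other_spec g v : incident g v ->
  ((src g == v) && (dst g == other g v)) || ((src g == other g v) && (dst g == v)).
Proof.
rewrite /other; case: ifP => [_|ns]; first by rewrite !eqxx.
by rewrite /Defs.incident ns /= => /eqP ->; rewrite !eqxx ?orbT.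
Qed.

Lemma grow (VF : {set V}) (EF : {set E}) v g : is_graph VF EF -> v \in VF -> g \notin EF ->
  incident g v ->
  exists (N : {set V}) (EW : {set E}),
    [/\ [disjoint N & VF], [disjoint EW & EF], g \in EW & #|EW| = #|N| + 1] /\
    [/\ is_graph (VF :|: N) (EF :|: EW), (forall x, x \in N -> 1 < deg EW x) &
        (forall x, x \in N -> connect (adj EW) v x)].
Proof.
move=> gF vF gE ig; have os := other_spec ig; set w := other g v in os.
case: (boolP (w \in VF)) => wF.
  exists set0, [set g]; split; split.
  - by rewrite disjoints_subset sub0set.
  - by rewrite disjoints_subset sub1set inE.
  - by rewrite inE.
  - by rewrite cards0 cards1.
  - apply/graphP => e; rewrite !inE => /orP[eF|/eqP ->].
      by have [-> ->] := (graphP _ _ gF) e eF.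
    by case/orP: os => /andP[/eqP -> /eqP ->]; rewrite vF wF.
  - by move=> x; rewrite inE.
  - by move=> x; rewrite inE.
have hf : ((src g == w) && (dst g \in VF)) || ((dst g == w) && (src g \in VF)).
  by case/orP: os => /andP[/eqP -> /eqP ->]; rewrite !eqxx vF ?orbT.
have [N [EW [[wN dN gEW cEW] [eEW dgW cnW]]]] := walk (leqnn _) wF hf.
exists N, (g |: EW); split; split.
- exact: dN.
- rewrite disjoints_subset; apply/subsetP => e; rewrite !inE => /orP[/eqP ->|eE] //.
  apply/negP => eF; have [s d] := (graphP _ _ gF) e eF.
  have [_ _ /orP[] xN] := eEW e eE.
    by rewrite (disjointFr dN xN) in s.
  by rewrite (disjointFr dN xN) in d.
- by rewrite !inE eqxx.
- by rewrite cardsU1 gEW cEW add1n addn1.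
- apply/graphP => e; rewrite !inE => /orP[eF|/orP[/eqP ->|eE]].
  + by have [-> ->] := (graphP _ _ gF) e eF.
  + by case/orP: os => /andP[/eqP -> /eqP ->]; rewrite vF wN ?orbT.
  + have [s d _] := eEW e eE; move: s d; rewrite !inE.
    by case/orP => ->; case/orP => ->; rewrite ?orbT.
- exact: dgW.
- move=> x xN; apply: connect_trans (connect1 (other_adj (A := g |: EW) _ ig)) _.
    by rewrite !inE eqxx.
  apply: connect_mono (cnW x xN); by apply/subsetP => e; rewrite !inE => ->; rewrite orbT.
Qed.

Definition conn r (VF : {set V}) (EF : {set E}) := forall x, x \in VF -> connect (adj EF) r x.
Definition defic (VF : {set V}) (EF : {set E}) := [set x in VF | deg EF x < 2].

Lemma closed_comp r (VF : {set V}) (EF : {set E}) :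
  is_graph VF EF -> r \in VF -> (forall x e, x \in VF -> incident e x -> e \in EF) ->
  forall u, connect (adj [set: E]) r u -> u \in VF.
Proof.
move=> gF rF hc u cu; suff <- : (r \in VF) = (u \in VF) by [].
apply: (closed_connect _ cu) => x y /existsP[e /andP[_ h]].
have ends : forall p, p \in VF -> incident e p -> (src e \in VF) && (dst e \in VF).
  move=> p pF ip; have eF := hc p e pF ip.
  by have [-> ->] := (graphP _ _ gF) e eF.
apply/idP/idP => pF; case/orP: h => /andP[/eqP sx /eqP dy];
  (have := ends _ pF; rewrite /Defs.incident sx dy eqxx ?orbT => /(_ isT) /andP[]) => //.
Qed.


Lemma defic_mem (VF : {set V}) (EF : {set E}) x : (x \in defic VF EF) = (x \in VF) && (deg EF x < 2).
Proof. by rewrite inE. Qed.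

Lemma handshake (VF : {set V}) (EF : {set E}) :
  is_graph VF EF -> \sum_(x in VF) deg EF x = 2 * #|EF|.
Proof.
move=> gF; rewrite sum_deg.
  congr (_ * _); apply: eq_card => e; rewrite inE.
  by case: (boolP (e \in EF)) => // eF; have [-> _] := (graphP _ _ gF) e eF.
by move=> e eF; have [-> ->] := (graphP _ _ gF) e eF.
Qed.


Lemma cardsU_disj (T : finType) (A B : {set T}) : [disjoint A & B] -> #|A :|: B| = #|A| + #|B|.
Proof. by move=> d; rewrite cardsU (disjoint_setI0 d) cards0 subn0. Qed.

Lemma fix0 r (Hnc : ~~ component_is_cycle src dst [set: V] [set: E] r)
  (VF : {set V}) (EF : {set E}) : is_graph VF EF -> r \in VF -> conn r VF EF ->
  mindeg2 VF EF -> #|EF| <= #|VF| + 1 ->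
  exists (VD : {set V}) (ED : {set E}),
    [/\ is_graph VD ED, VF \subset VD, EF \subset ED, mindeg2 VD ED & conn r VD ED] /\
    (exists2 u, u \in VD & 2 < deg ED u) /\ #|ED| <= #|VD| + 1.
Proof.
move=> gF rF cF d0 phi.
case: (boolP [exists u in VF, 2 < deg EF u]) => [/exists_inP[u uF du]|/exists_inPn n3].
  exists VF, EF; split; first by split; rewrite ?subxx.
  by split; first by exists u.
have d2 : forall x, x \in VF -> deg EF x = 2.
  by move=> x xF; have := d0 x xF; have := n3 x xF; rewrite -leqNgt; move=> a1 a2; clear -a1 a2; lia.
have cEV : #|EF| = #|VF|.
  have := handshake gF; rewrite (eq_bigr (fun _ => 2)) ?sum_nat_const; last by move=> x /d2.
  by move=> h; clear -h; lia.
have : [exists w in VF, [exists g, (g \notin EF) && incident g w]].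
  apply: contraR Hnc => /exists_inPn hn.
  have hc : forall x e, x \in VF -> incident e x -> e \in EF.
    move=> x e xF ie; apply: contraLR (hn x xF) => eF.
    by rewrite negbK; apply/existsP; exists e; rewrite eF ie.
  apply/forall_inP => u; rewrite inE => /andP[_ cu].
  have uF := closed_comp gF rF hc cu.
  rewrite (deg_split EF) d2 //.
  case: (posnP (deg (~: EF) u)) => [->//|/deg_pos_inc [e]].
  by rewrite inE => /negP eF /(hc _ _ uF).
case/exists_inP => w wF /existsP[g /andP[gE ig]].
have [N [EW [[dN dE gEW cEW] [g' dW cW]]]] := grow gF wF gE ig.
have dEF : [disjoint EF & EW] by rewrite disjoint_sym.
exists (VF :|: N), (EF :|: EW); split; [split|split].
- exact: g'.
- exact: subsetUl.
- exact: subsetUl.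
- move=> x; rewrite inE => /orP[xF|xN].
    by apply: leq_trans (d0 x xF) (deg_sub _ (subsetUl _ _)).
  by apply: leq_trans (dW x xN) (deg_sub _ (subsetUr _ _)).
- move=> x; rewrite inE => /orP[xF|xN].
    exact: connect_mono (subsetUl _ _) (cF x xF).
  apply: connect_trans (connect_mono (subsetUl _ _) (cF w wF)) (connect_mono (subsetUr _ _) (cW x xN)).
- exists w; first by rewrite inE wF.
  rewrite degU // d2 //; have := deg_mem w gEW; have := cnt_pos ig; move=> a1 a2; clear -a1 a2; lia.
- rewrite !cardsU_disj // 1?disjoint_sym //; clear -cEW cEV; lia.
Qed.

Lemma fix_lemma r (Hnc : ~~ component_is_cycle src dst [set: V] [set: E] r) n :
  forall (VF : {set V}) (EF : {set E}), is_graph VF EF -> r \in VF -> conn r VF EF ->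
  (forall x, x \in VF -> 0 < deg EF x) ->
  #|EF| + #|defic VF EF| <= #|VF| + 1 -> #|defic VF EF| <= n ->
  exists (VD : {set V}) (ED : {set E}),
    [/\ is_graph VD ED, VF \subset VD, EF \subset ED, mindeg2 VD ED & conn r VD ED] /\
    (exists2 u, u \in VD & 2 < deg ED u) /\ #|ED| <= #|VD| + 1.
Proof.
elim: n => [|n IH] VF EF gF rF cF pF phi dn.
  have d0 : mindeg2 VF EF.
    move=> x xF; move: dn; rewrite leqn0 cards_eq0 => /eqP /setP /(_ x).
    by rewrite !inE xF /= ltnNge => /negbFE.
  apply: fix0 => //; clear -phi; lia.
case: (posnP #|defic VF EF|) => [d0|].
  apply: (IH VF EF) => //; by rewrite d0.
case/card_gt0P => v; rewrite inE => /andP[vF dv].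
have : 0 < deg (~: EF) v by have := Hd2 v; rewrite (deg_split EF); move=> a; clear -a dv; lia.
case/deg_pos_inc => g; rewrite inE => gE ig.
have [N [EW [[dN dE gEW cEW] [g' dW cW]]]] := grow gF vF gE ig.
have dEF : [disjoint EF & EW] by rewrite disjoint_sym.
have degE' : forall x, deg (EF :|: EW) x = deg EF x + deg EW x by move=> x; rewrite degU.
have sub : defic (VF :|: N) (EF :|: EW) \subset defic VF EF :\ v.
  apply/subsetP => x; rewrite !inE degE' => /andP[/orP[xF|xN] dx].
    rewrite xF (leq_ltn_trans (leq_addr _ _) dx) !andbT.
    apply/eqP => xv; move: dx; rewrite xv; have := deg_mem v gEW; have := cnt_pos ig.
    have := pF v vF; move=> a1 a2 a3 a4; clear -a1 a2 a3 a4; lia.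
  by have := dW x xN; move=> a; clear -a dx; lia.
have cdef : #|defic (VF :|: N) (EF :|: EW)| < #|defic VF EF|.
  apply: leq_ltn_trans (subset_leq_card sub) _.
  by rewrite (cardsD1 v (defic VF EF)) inE vF dv.
have cE : #|EF :|: EW| = #|EF| + #|N| + 1 by rewrite cardsU_disj // cEW addnA.
have cV : #|VF :|: N| = #|VF| + #|N| by rewrite cardsU_disj // disjoint_sym.
have [VD [ED [[gD sV sE mD cD] [ex cc]]]] : exists (VD : {set V}) (ED : {set E}),
    [/\ is_graph VD ED, VF :|: N \subset VD, EF :|: EW \subset ED, mindeg2 VD ED & conn r VD ED] /\
    (exists2 u, u \in VD & 2 < deg ED u) /\ #|ED| <= #|VD| + 1.
  apply: IH => //.
  - by rewrite inE rF.
  - move=> x; rewrite inE => /orP[xF|xN].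
      exact: connect_mono (subsetUl _ _) (cF x xF).
    apply: connect_trans (connect_mono (subsetUl _ _) (cF v vF)) (connect_mono (subsetUr _ _) (cW x xN)).
  - move=> x; rewrite inE degE' => /orP[xF|xN]; first by have := pF x xF; move=> a; clear -a; lia.
    by have := dW x xN; move=> a; clear -a; lia.
  - by rewrite cE cV; move: phi cdef; move=> a b; clear -a b; lia.
  - by move: cdef dn; move=> a b; clear -a b; lia.
exists VD, ED; split; last by [].
split => //; [exact: subset_trans (subsetUl _ _) sV | exact: subset_trans (subsetUl _ _) sE].
Qed.

Definition Inv r a (VF : {set V}) (EF : {set E}) t :=
  [/\ is_graph VF EF, r \in VF, conn r VF EF, a \in EF & t \in VF] /\
  (forall x, x \in VF -> 0 < deg EF x) /\
  #|EF| + #|defic VF EF| + (1 < deg EF t) <= #|VF| + 1.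

Lemma degU1 e (EF : {set E}) x : e \notin EF -> deg (e |: EF) x = cnt e x + deg EF x.
Proof. by move=> eE; rewrite degU ?deg1 // disjoints_subset sub1set inE. Qed.

Lemma cardD1le (A : {set V}) t : #|A :\ t| + (t \in A) = #|A|.
Proof. by rewrite (cardsD1 t A) addnC. Qed.

Lemma step_new r a (VF : {set V}) (EF : {set E}) t e :
  Inv r a VF EF t -> incident e t -> other e t \notin VF ->
  Inv r a (other e t |: VF) (e |: EF) (other e t).
Proof.
move=> [[gF rF cF aF tF] [pF phi]] it yF; set y := other e t in yF *.
have os := other_spec it; rewrite -/y in os.
have yt : y != t by apply: contraNneq yF => ->.
have eE : e \notin EF.
  apply/negP => eF; have [s d] := (graphP _ _ gF) e eF.
  by case/orP: os => /andP[/eqP h1 /eqP h2]; [rewrite -h2 d in yF | rewrite -h1 s in yF].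
have ty : (t == y) = false by apply/negbTE; rewrite eq_sym.
have yt' : (y == t) = false by apply/negbTE.
have ct : cnt e t = 1.
  by rewrite /cnt; case/orP: os => /andP[/eqP -> /eqP ->]; rewrite eqxx ?ty ?yt'.
have cy : cnt e y = 1.
  by rewrite /cnt; case/orP: os => /andP[/eqP -> /eqP ->]; rewrite eqxx ?ty ?yt'.
have c0 : forall x, x != t -> x != y -> cnt e x = 0.
  move=> x xt xy; rewrite /cnt; have tx : (t == x) = false by apply/negbTE; rewrite eq_sym.
  have yx : (y == x) = false by apply/negbTE; rewrite eq_sym.
  by case/orP: os => /andP[/eqP -> /eqP ->]; rewrite tx yx.
have dy : deg EF y = 0.
  case: (posnP (deg EF y)) => // /deg_pos_inc [f fF iy].
  have [s d] := (graphP _ _ gF) f fF; move: iy; rewrite /Defs.incident.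
  by case/orP => /eqP h; [move: s | move: d]; rewrite h (negPf yF).
split; [split|split].
- apply/graphP => f; rewrite !inE => /orP[/eqP ->|fF].
    by case/orP: os => /andP[/eqP -> /eqP ->]; rewrite eqxx tF ?orbT.
  by have [-> ->] := (graphP _ _ gF) f fF; rewrite ?orbT.
- by rewrite inE rF orbT.
- move=> x; rewrite !inE => /orP[/eqP ->|xF].
    apply: connect_trans (connect_mono (subsetUr _ _) (cF t tF)) (connect1 _).
    by apply: other_adj; rewrite ?inE ?eqxx.
  exact: connect_mono (subsetUr _ _) (cF x xF).
- by rewrite inE aF orbT.
- by rewrite !inE eqxx.
- move=> x; rewrite !inE degU1 // => /orP[/eqP ->|xF]; first by rewrite cy.
  by have := pF x xF; move=> a1; clear -a1; lia.
have sub : defic (y |: VF) (e |: EF) \subset y |: (defic VF EF :\ t).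
  apply/subsetP => x; rewrite !inE degU1 // => /andP[xV dx].
  case: (eqVneq x y) => // xy /=; move: xV; rewrite (negPf xy) /= => xF; case: (eqVneq x t) => [xt|xt] /=.
    by move: dx; rewrite xt ct; have := pF t tF; move=> a1 a2; clear -a1 a2; lia.
  by rewrite c0 // in dx; rewrite xF dx.
have cdy : deg (e |: EF) y = 1 by rewrite degU1 // cy dy.
rewrite cdy /= addn0 !cardsU1 eE yF /=.
have c1 := subset_leq_card sub.
have c2 : #|y |: (defic VF EF :\ t)| <= 1 + #|defic VF EF :\ t|.
  by rewrite cardsU1; case: (_ \notin _).
have c3 := cardD1le (defic VF EF) t.
have tdef : (t \in defic VF EF) = ~~ (1 < deg EF t) by rewrite inE tF /= ltnNge.
move: phi c1 c2 c3; rewrite tdef; case: (1 < deg EF t) => /= a1 a2 a3 a4;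
  clear -a1 a2 a3 a4; lia.
Qed.


Definition Pre r a (VF : {set V}) (EF : {set E}) :=
  [/\ is_graph VF EF, r \in VF, conn r VF EF, a \in EF & (forall x, x \in VF -> 0 < deg EF x)] /\
  #|EF| + #|defic VF EF| <= #|VF| + 1.

Lemma Inv_Pre r a VF EF t : Inv r a VF EF t -> Pre r a VF EF.
Proof. by move=> [[gF rF cF aF tF] [pF phi]]; split; [split | move: phi; lia]. Qed.

Lemma step_close r a (VF : {set V}) (EF : {set E}) t e :
  Inv r a VF EF t -> e \notin EF -> incident e t -> other e t \in VF ->
  Pre r a VF (e |: EF).
Proof.
move=> [[gF rF cF aF tF] [pF phi]] eE it yF.
have os := other_spec it.
split; [split|].
- apply/graphP => f; rewrite !inE => /orP[/eqP ->|fF].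
    by case/orP: os => /andP[/eqP -> /eqP ->]; rewrite tF yF.
  exact: (graphP _ _ gF).
- exact: rF.
- move=> x xF; exact: connect_mono (subsetUr _ _) (cF x xF).
- by rewrite !inE aF orbT.
- move=> x xF; rewrite degU1 //; have := pF x xF; move=> a1; clear -a1; lia.
have sub : defic VF (e |: EF) \subset defic VF EF :\ t.
  apply/subsetP => x; rewrite !inE degU1 // => /andP[xF dx]; rewrite xF.
  case: (eqVneq x t) => [xt|xt] /=.
    by move: dx; rewrite xt; have := pF t tF; have := cnt_pos it; move=> a1 a2 a3; clear -a1 a2 a3; lia.
  by move: dx; move=> a1; clear -a1; lia.
have c1 := subset_leq_card sub.
have c3 := cardD1le (defic VF EF) t.
have tdef : (t \in defic VF EF) = ~~ (1 < deg EF t) by rewrite inE tF /= ltnNge.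
rewrite cardsU1 eE.
move: phi c1 c3; rewrite tdef; case: (1 < deg EF t) => /= a1 a2 a3;
  clear -a1 a2 a3; lia.
Qed.

Lemma ext r a q : forall (VF : {set V}) (EF : {set E}) t,
  Inv r a VF EF t -> path (adj [set: E]) t q -> uniq q -> all (fun v => v \notin VF) q ->
  exists (VF' : {set V}) (EF' : {set E}), Inv r a VF' EF' (last t q).
Proof.
elim: q => [|w q IH] VF EF t I; first by move=> *; exists VF, EF.
rewrite /= => /andP[/existsP[e /andP[_ he]] pq] /andP[wq uq] /andP[wF aq].
have it : incident e t by rewrite /Defs.incident; case/orP: he => /andP[/eqP -> /eqP ->]; rewrite eqxx ?orbT.
have ow : other e t = w.
  rewrite /other; case/orP: he => /andP[/eqP -> /eqP ->]; rewrite ?eqxx //.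
  case: eqP => // wt; move: I => [[_ _ _ _ tF] _]; by rewrite wt tF in wF.
have I' := step_new I it; rewrite ow in I'; have {}I' := I' wF.
apply: (IH _ _ _ I' pq uq); apply/allP => x xq; rewrite !inE negb_or.
by rewrite (allP aq x xq) andbT; apply: contraNneq wq => <-.
Qed.

Lemma seed a t : t \in [set src a; dst a] -> Inv (src a) a [set src a; dst a] [set a] t.
Proof.
move=> tA.
have ends : forall x, x \in [set src a; dst a] -> 0 < cnt a x.
  by move=> x; rewrite !inE /cnt => /orP[] /eqP ->; rewrite eqxx ?addn1 ?add1n.
split; [split|split].
- apply/graphP => e; rewrite inE => /eqP ->; by rewrite !inE !eqxx ?orbT.
- by rewrite !inE eqxx.
- move=> x; rewrite !inE => /orP[] /eqP ->; first exact: connect0.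
  by apply: connect1; apply/existsP; exists a; rewrite inE !eqxx.
- by rewrite inE.
- exact: tA.
- by move=> x xA; rewrite deg1; apply: ends.
rewrite cards1 deg1 cards2.
case: (eqVneq (src a) (dst a)) => [sd|sd].
  have -> : defic [set src a; dst a] [set a] = set0.
    apply/setP => x; rewrite !inE deg1 /cnt -sd orbb; case: eqP => //= ->.
    by rewrite eqxx.
  by rewrite cards0; move: tA; rewrite !inE -sd orbb => /eqP ->; rewrite /cnt -sd eqxx.
have c1 : 1 < cnt a t = false.
  move: tA; rewrite !inE /cnt => /orP[] /eqP ->; rewrite eqxx ?(negPf sd) //.
  by rewrite eq_sym (negPf sd).
rewrite c1 addn0 /=.
have := subset_leq_card (_ : defic [set src a; dst a] [set a] \subset [set src a; dst a]).
rewrite cards2 sd => /(_ _) h; suff : #|defic [set src a; dst a] [set a]| <= 2 by lia.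
by apply: h; apply/subsetP => x; rewrite inE => /andP[].
Qed.
End Walk.
End Basics.

Lemma suffix (T : eqType) (e : rel T) (A : pred T) x p : path e x p ->
  exists y q, [/\ path e y q, last y q = last x p, all (fun v => ~~ A v) q & (y = x \/ A y)].
Proof.
elim: p x => [|w p IH] x /=; first by move=> _; exists x, [::]; split => //; left.
case/andP => exw pw; have [y [q [pq lq aq hy]]] := IH w pw.
case: hy => [yw|Ay]; last by exists y, q; split => //; right.
subst y; case: (boolP (A w)) => Aw; first by exists w, q; split => //; right.
by exists x, (w :: q); split => //=; [rewrite exw | rewrite Aw | left].
Qed.


Unset Implicit Arguments.

Theorem mainTheorem5 (V E : finType) (src dst : E -> V) (a b : E)
  (HG : cacti src dst [set: V] [set: E]) :
  (connect (adj src dst [set: E]) (src a) (src b) ->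
     forall k : int, (1 <= k)%R -> (k <= Delta [set: V] [set: E])%R ->
     exists (VF : {set V}) (EF : {set E}),
       [/\ is_subgraph src dst VF EF [set: V] [set: E], a \in EF, b \in EF,
           cacti src dst VF EF & Delta VF EF = k])
  /\
  (~~ connect (adj src dst [set: E]) (src a) (src b) ->
     forall k : int, (2 <= k)%R -> (k <= Delta [set: V] [set: E])%R ->
     exists (VF : {set V}) (EF : {set E}),
       [/\ is_subgraph src dst VF EF [set: V] [set: E], a \in EF, b \in EF,
           cacti src dst VF EF & Delta VF EF = k]).
Proof.
have Hd2 : forall v, 1 < deg src dst [set: E] v.
  move=> v; case/and3P: HG => /forall_inP h1 /forall_inP h2 _.
  exact: notleaf_deg (h1 v (in_setT v)) (h2 v (in_setT v)).
have Hnc : forall r, ~~ component_is_cycle src dst [set: V] [set: E] r.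
  by move=> r; case/and3P: HG => _ _ /forall_inP h3; exact: h3 r (in_setT r).
have gG : is_graph src dst [set: V] [set: E] by apply/graphP => e _; rewrite !in_setT.
have mG : mindeg2 src dst [set: V] [set: E] by move=> v _; exact: Hd2 v.
have finish : forall (kn : nat) (VD : {set V}) (ED : {set E}), is_graph src dst VD ED ->
    mindeg2 src dst VD ED -> P3 src dst VD ED -> a \in ED -> b \in ED ->
    #|ED| <= #|VD| + kn -> (Posz kn <= Delta [set: V] [set: E])%R ->
    exists (VF : {set V}) (EF : {set E}),
       [/\ is_subgraph src dst VF EF [set: V] [set: E], a \in EF, b \in EF,
           cacti src dst VF EF & Delta VF EF = Posz kn].
  move=> kn VD ED gD mD pD aD bD cD hk.
  have hk' : #|[set: V]| + kn <= #|[set: E]| by move: hk; rewrite /Delta; clear; lia.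
  have [VF [EF [gF aF bF cF eF]]] := partA gD mD pD aD bD cD
    (n := #|[set: E]| + #|[set: V]|) gG (subsetT _) (subsetT _) mG hk' (leqnn _).
  exists VF, EF; split => //; first by rewrite /is_subgraph gF !subsetT.
  by rewrite /Delta eF; clear; lia.
have build : forall (c : E) (VF : {set V}) (EF : {set E}),
    Pre src dst (src c) c VF EF ->
    exists (VD : {set V}) (ED : {set E}),
      [/\ is_graph src dst VD ED, VF \subset VD, EF \subset ED, mindeg2 src dst VD ED &
          conn src dst (src c) VD ED] /\ P3 src dst VD ED /\ #|ED| <= #|VD| + 1.
  move=> c VF EF [[g2 r2 c2 a2 p2] phi2].
  have [VD [ED [[gD sV sE mD cD] [[u uD du] cc]]]] :=
    fix_lemma Hd2 (Hnc (src c)) (n := #|defic src dst VF EF|) g2 r2 c2 p2 phi2 (leqnn _).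
  exists VD, ED; split => //; split => // v vD; exists u => //; rewrite du andbT.
  apply: connect_trans _ (cD u uD); by rewrite (sym_connect_sym (adj_sym src dst ED)) cD.
split.
  move=> cab k k1 kD; case: k k1 kD => [kn|kn] k1 kD; last by move: k1; clear; lia.
  have kn1 : 1 <= kn by move: k1; clear; lia.
  case/connectP: cab => p pp lp.
  have [y [q [pq lq aq hy]]] := @suffix _ _ (fun v => v \in [set src a; dst a]) _ _ pp.
  have yA : y \in [set src a; dst a] by case: hy => [->|//]; rewrite !inE eqxx.
  have lq' : last y q = src b by rewrite lq -lp.
  case/shortenP: pq lq' => q' pq' uq' sq' lq'.
  have uq : uniq q' by case/andP: uq'.
  have aq' : all (fun v => v \notin [set src a; dst a]) q'.
    by apply/allP => x /sq' xq; exact: (allP aq x xq).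
  have [VF1 [EF1 I1]] := ext (seed yA) pq' uq aq'.
  rewrite lq' in I1.
  have [VF2 [EF2 [P2 bE2]]] : exists (VF2 : {set V}) (EF2 : {set E}),
      Pre src dst (src a) a VF2 EF2 /\ b \in EF2.
    case: (boolP (b \in EF1)) => bE1; first by exists VF1, EF1; split => //; exact: Inv_Pre I1.
    have ib : incident src dst b (src b) by rewrite /incident eqxx.
    case: (boolP (other src dst b (src b) \in VF1)) => oF.
      exists VF1, (b |: EF1); split; [exact: step_close I1 bE1 ib oF | by rewrite !inE eqxx].
    exists (other src dst b (src b) |: VF1), (b |: EF1); split;
      [exact: Inv_Pre (step_new I1 ib oF) | by rewrite !inE eqxx].
  have [VD [ED [[gD sV sE mD cD] [pD cc]]]] := build a _ _ P2.
  have aE2 : a \in EF2 by case: P2 => [[]].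
  apply: (finish kn VD ED gD mD pD _ _ _ kD).
  - exact: (subsetP sE _ aE2).
  - exact: (subsetP sE _ bE2).
  - by move: cc kn1; clear; lia.
move=> ncab k k2 kD; case: k k2 kD => [kn|kn] k2 kD; last by move: k2; clear; lia.
have kn2 : 2 <= kn by move: k2; clear; lia.
have sa : src a \in [set src a; dst a] by rewrite !inE eqxx.
have sb : src b \in [set src b; dst b] by rewrite !inE eqxx.
have [Va [Ea [[ga _ sEa ma ca] [pa cca]]]] := build a _ _ (Inv_Pre (seed sa)).
have [Vb [Eb [[gb _ sEb mb cb] [pb ccb]]]] := build b _ _ (Inv_Pre (seed sb)).
have aEa : a \in Ea by apply: (subsetP sEa); rewrite inE.
have bEb : b \in Eb by apply: (subsetP sEb); rewrite inE.
have dV : [disjoint Va & Vb].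
  apply/pred0P => x /=; apply/negP => /andP[xa xb]; move/negP: ncab; apply.
  apply: connect_trans (connect_mono (subsetT _) (ca x xa)) _.
  rewrite (sym_connect_sym (adj_sym src dst _)); exact: connect_mono (subsetT _) (cb x xb).
have dE : [disjoint Ea & Eb].
  apply/pred0P => e /=; apply/negP => /andP[ea eb].
  have [s _] := (graphP _ _ _ _ ga) e ea; have [s' _] := (graphP _ _ _ _ gb) e eb.
  by rewrite (disjointFr dV s) in s'.
apply: (finish kn (Va :|: Vb) (Ea :|: Eb) _ _ _ _ _ _ kD).
- apply/graphP => e; rewrite inE => /orP[ea|eb].
    by have [s d] := (graphP _ _ _ _ ga) e ea; rewrite !inE s d.
  by have [s d] := (graphP _ _ _ _ gb) e eb; rewrite !inE s d !orbT.
- move=> x; rewrite inE => /orP[xa|xb].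
    exact: leq_trans (ma x xa) (deg_sub _ _ _ (subsetUl _ _)).
  exact: leq_trans (mb x xb) (deg_sub _ _ _ (subsetUr _ _)).
- move=> x; rewrite inE => /orP[xa|xb].
    have [u ua /andP[cu du]] := pa x xa; exists u; first by rewrite inE ua.
    rewrite (connect_mono (subsetUl _ _) cu) /=.
    exact: leq_trans du (deg_sub _ _ _ (subsetUl _ _)).
  have [u ub /andP[cu du]] := pb x xb; exists u; first by rewrite inE ub orbT.
  rewrite (connect_mono (subsetUr _ _) cu) /=.
  exact: leq_trans du (deg_sub _ _ _ (subsetUr _ _)).
- by rewrite inE aEa.
- by rewrite inE bEb orbT.
rewrite !cardsU_disj //; move: cca ccb kn2; clear; lia.
Qed.
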